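(* Let $n\ge1$ and $1\le m\le\lfloor n/2\rfloor$. For every $l\in\{0,1,\dots,m-1\}$, $$\bigl|\{\pi\in\mathfrak{S}_n:{\rm altmaj}(\pi)\equiv l \pmod{2m}\}\bigr|=\bigl|\{\pi\in\mathfrak{S}_n:{\rm altmaj}(\pi)\equiv l+m \pmod{2m}\}\bigr|.$$ Consequently, $1+q^m$ divides $\sum_{\pi\in\mathfrak{S}_n}q^{{\rm altmaj}(\pi)}$ for $1\le m\le \lfloor n/2\rfloor$.
   Context: $\mathfrak{S}_n$ is the set of permutations $\pi=\pi_1\cdots\pi_n$ of $\{1,\dots,n\}$; $\widehat{D}(\pi)=\{2i:\pi_{2i}<\pi_{2i+1}\}\cup\{2i+1:\pi_{2i+1}>\pi_{2i+2}\}$ (indices in $\{1,\dots,n-1\}$) and ${\rm altmaj}(\pi)=\sum_{i\in\widehat{D}(\pi)}i$. *)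

(* Defs.v *)
From mathcomp Require Import all_boot all_order all_algebra all_fingroup.
Set Implicit Arguments. Unset Strict Implicit. Unset Printing Implicit Defensive.

(* Permutations of {1,...,n} are represented by s : 'S_n (permutations of
   {0,...,n-1}).  The 1-indexed value pi_i (1 <= i <= n) is represented by
   val (s (i-1)); this shift by one preserves all comparisons. *)
Definition pval (n : nat) (s : 'S_n) (i : nat) : nat :=
  match (insub i.-1 : option 'I_n) with Some j => val (s j) | None => 0 end.

Definition in_altdes (n : nat) (s : 'S_n) (i : nat) : bool :=
  if odd i then pval s i.+1 < pval s i else pval s i < pval s i.+1.

Definition altmaj (n : nat) (s : 'S_n) : nat :=
  \sum_(1 <= i < n | in_altdes s i) i.

(* Main.v *)
From Pilot Require Import Defs.
From mathcomp Require Import all_boot all_order all_algebra all_fingroup.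
From mathcomp Require Import zify.
Import Pilot.Defs.
Set Implicit Arguments. Unset Strict Implicit.

Section Rho.
Variables (n d : nat) (hd : d <= n).

Definition rho_fun (i : 'I_n) : 'I_n :=
  if (i < d)%N then insubd i (d.-1 - i) else i.

Lemma rho_val (i : 'I_n) : val (rho_fun i) = if (i < d)%N then d.-1 - i else i.
Proof.
rewrite /rho_fun; case: ifP => // hi.
by rewrite val_insubd; case: ifP => //; move/negbT; rewrite -leqNgt; lia.
Qed.

Lemma rho_invol : involutive rho_fun.
Proof.
move=> i; apply: val_inj; rewrite !rho_val.
case: (ltnP i d) => hi.
  have -> : (d.-1 - i < d)%N by lia.
  rewrite /=; lia.
by rewrite ltnNge hi.
Qed.

Definition rho : 'S_n := perm (inv_inj rho_invol).

Lemma pvalS (s : 'S_n) k (hk : (k < n)%N) : pval s k.+1 = val (s (Ordinal hk)).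
Proof. by rewrite /pval /= insubT. Qed.

Lemma pval_inj (s : 'S_n) i j : (1 <= i <= n)%N -> (1 <= j <= n)%N -> i != j ->
  pval s i != pval s j.
Proof.
case: i => // i; case: j => // j /andP[_ hi] /andP[_ hj] hij.
rewrite (pvalS s hi) (pvalS s hj).
apply/negP => /eqP /val_inj /perm_inj [] e; move: hij; by rewrite e eqxx.
Qed.

Lemma pval_lo (s : 'S_n) i : (1 <= i <= d)%N -> pval (rho * s) i = pval s (d.+1 - i).
Proof.
case: i => // k /andP[_ hk].
have hkn : (k < n)%N by lia.
have -> : (d.+1 - k.+1 = (d.-1 - k).+1)%N by lia.
have hk2 : (d.-1 - k < n)%N by lia.
rewrite (pvalS _ hkn) (pvalS _ hk2) permM permE; congr (val (s _)).
by apply: val_inj; rewrite rho_val /= hk.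
Qed.

Lemma pval_hi (s : 'S_n) i : (d < i)%N -> pval (rho * s) i = pval s i.
Proof.
move=> hi; rewrite /pval; case: insubP => // j _ hj.
rewrite permM permE; congr (val (s _)); apply: val_inj.
rewrite rho_val hj; case: ifP => //; lia.
Qed.

End Rho.

Section Main.
Variables (n m : nat) (hm : (1 <= m)%N) (hd : (2 * m <= n)%N).
Local Notation d := (2 * m)%N.
Local Notation r := (rho hd).

Lemma altdes_lo (s : 'S_n) i : (1 <= i < d)%N ->
  in_altdes (r * s) i = ~~ in_altdes s (d - i).
Proof.
move=> hi; rewrite /in_altdes (pval_lo hd); last by lia.
rewrite (pval_lo hd); last by lia.
have -> : (d.+1 - i.+1 = d - i)%N by lia.
have -> : (d.+1 - i = (d - i).+1)%N by lia.
have ho : odd (d - i) = odd i.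
  rewrite oddB; last by lia.
  by rewrite oddM /=.
have hne : pval s (d - i) != pval s (d - i).+1.
  apply: pval_inj; lia.
rewrite ho; case: (odd i); move: hne;
  case: (ltngtP (pval s (d - i)) (pval s (d - i).+1)) => //.
Qed.

Lemma altdes_hi (s : 'S_n) i : (d < i)%N -> in_altdes (r * s) i = in_altdes s i.
Proof.
move=> hi; rewrite /in_altdes !(pval_hi hd) //; lia.
Qed.

Lemma sum_id k : ((\sum_(0 <= i < k) i).*2 = k * k.-1)%N.
Proof.
elim: k => [|k IH]; first by rewrite big_geq.
rewrite big_nat_recr //= doubleD IH; case: k {IH} => //= k; lia.
Qed.

Lemma altmaj_rho (s : 'S_n) : altmaj (r * s) %% d = (altmaj s + m) %% d.
Proof.
have hd1 : (1 <= d)%N by lia.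
rewrite /altmaj big_mkcond [X in _ = (X + m) %% _]big_mkcond /= !(@big_cat_nat _ _ _ d 1 n) //=.
set Y' := \sum_(1 <= i < d) (if in_altdes (r * s) i then i else 0).
set X' := \sum_(d <= i < n) (if in_altdes (r * s) i then i else 0).
set Y := \sum_(1 <= i < d) (if in_altdes s i then i else 0).
set X := \sum_(d <= i < n) (if in_altdes s i then i else 0).
have hX : X' %% d = X %% d.
  rewrite /X /X'; case: (ltnP d n) => hdn; last by rewrite !big_geq.
  rewrite big_ltn // [in RHS]big_ltn //.
  rewrite (eq_big_nat _ _ (F1 := fun i => if in_altdes (r * s) i then i else 0)
     (F2 := fun i => if in_altdes s i then i else 0)); last first.
    by move=> i hi; rewrite altdes_hi //; lia.
  by case: ifP => _; case: ifP => _; rewrite ?add0n ?modnDl.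
set D := fun i => in_altdes s i.
set A := \sum_(1 <= i < d) (if ~~ D i then d - i else 0).
set Z := \sum_(1 <= i < d) (if ~~ D i then i else 0).
set T := \sum_(1 <= i < d) i.
have hY' : Y' = A.
  rewrite /Y' /A (eq_big_nat _ _ (F2 := fun i => if ~~ D (d - i) then i else 0)); last first.
    by move=> i hi; rewrite altdes_lo.
  rewrite big_nat_rev; apply: eq_big_nat => i hi.
  have -> : (1 + d - i.+1 = d - i)%N by lia.
  have -> : (d - (d - i) = i)%N by lia.
  by [].
have hAZ : (d %| A + Z)%N.
  rewrite /A /Z -big_split /= (eq_big_nat _ _ (F2 := fun i => if ~~ D i then d else 0)).
    by apply: dvdn_sum => i _; case: ifP => _; rewrite ?dvdn0 ?dvdnn.
  by move=> i hi; case: ifP => _ //; lia.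
have hZY : (Z + Y = T)%N.
  rewrite /Z /Y /T -big_split /=; apply: eq_big_nat => i _.
  by rewrite /D /=; case: (in_altdes s i); rewrite ?addn0.
have hT : (T.*2 = d * d.-1)%N.
  by rewrite -sum_id /T [in RHS]big_ltn // add0n.
have hTm : (T + m = m * d)%N.
  move: hT; clear; lia.
have hA : A %% d = (Y + m) %% d.
  move/dvdnP: hAZ => [k hk].
  have e : (m * d + A = k * d + (Y + m))%N.
    move: hk hZY hTm; clear; lia.
  by rewrite -(modnMDl m A) e modnMDl.
rewrite hY' -modnDm hA hX modnDm.
by rewrite addnAC.
Qed.

End Main.

From mathcomp Require Import ring.
Import GRing.Theory.
Local Open Scope ring_scope.

Lemma oddpow (y : {poly int}) (t : nat) : exists q : {poly int}, 1 + y ^+ (2 * t + 1) = q * (1 + y).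
Proof.
elim: t => [|t [q IH]]; first by exists 1; rewrite mul1r muln0 add0n expr1.
exists (y ^+ 2 * q + (1 - y)).
have -> : (2 * t.+1 + 1 = 2 + (2 * t + 1))%N by lia.
rewrite exprD.
have e : y ^+ (2 * t + 1) = q * (1 + y) - 1 by rewrite -IH; ring.
rewrite e; ring.
Qed.

Lemma pair_div (m a b : nat) : (0 < m)%N -> ((a + m) %% (2 * m) = b %% (2 * m))%N ->
  exists q : {poly int}, 'X^a + 'X^b = q * (1 + 'X^m).
Proof.
move=> hm.
have key : forall a b : nat, (a <= b)%N -> ((a + m) %% (2 * m) = b %% (2 * m))%N ->
    exists q : {poly int}, 'X^a + 'X^b = q * (1 + 'X^m).
  move=> {}a {}b hab hmod.
  have hb : b = (a + (b - a))%N by lia.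
  have he : ((b - a) %% (2 * m) = m)%N.
    have : (a + m == a + (b - a) %[mod 2 * m])%N by rewrite -hb hmod.
    rewrite eqn_modDl => /eqP <-; rewrite modn_small //; lia.
  set t := ((b - a) %/ (2 * m))%N.
  have hb2 : b = (a + m * (2 * t + 1))%N.
    have := divn_eq (b - a) (2 * m); rewrite he -/t; lia.
  have [q hq] := oddpow ('X^m) t.
  exists ('X^a * q).
  rewrite hb2 exprD exprM -mulrA -hq; ring.
move=> hmod; case: (leqP a b) => hab; first exact: key.
have h2 : ((b + m) %% (2 * m) = a %% (2 * m))%N.
  rewrite -modnDml -hmod modnDml -addnA.
  have -> : (m + m = 2 * m)%N by lia.
  by rewrite modnDr.
have [q hq] := key b a (ltnW hab) h2.
by exists q; rewrite addrC.
Qed.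

Theorem theorem4p9 (n m : nat) :
  (1 <= n)%N -> (1 <= m)%N -> (m <= n./2)%N ->
  (forall l : nat, (l < m)%N ->
     #|[set s : 'S_n | altmaj s %% (2 * m) == l %% (2 * m)]|%N =
     #|[set s : 'S_n | altmaj s %% (2 * m) == (l + m) %% (2 * m)]|%N)
  /\
  (exists r : {poly int},
     \sum_(s : 'S_n) 'X^(altmaj s) = r * (1 + 'X^m)).
Proof.
move=> hn hm hmn.
have hd : (2 * m <= n)%N by move: hmn; rewrite geq_half_double -mul2n.
set r := rho hd.
split.
  move=> l _.
  rewrite -[RHS](card_preimset _ (mulgI r)); apply: eq_card => s.
  rewrite !inE (altmaj_rho hm hd).
  by rewrite eqn_modDr.
pose P (s : 'S_n) := (pval s 1 < pval s (2 * m))%N.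
have hP : forall s, ~~ P (r * s)%g = P s.
  move=> s; rewrite /P (pval_lo hd) ?(pval_lo hd); try lia.
  have -> : ((2 * m).+1 - 1 = 2 * m)%N by lia.
  have -> : ((2 * m).+1 - 2 * m = 1)%N by lia.
  have hne : pval s 1 != pval s (2 * m) by apply: pval_inj; lia.
  move: hne; case: ltngtP => //.
rewrite (bigID P) /= [X in _ + X](reindex_inj (mulgI r)) /=.
rewrite [X in _ + X](eq_bigl P); last by move=> s; rewrite hP.
rewrite -big_split /=.
apply: (big_ind (fun p : {poly int} => exists q, p = q * (1 + 'X^m))).
- by exists 0; rewrite mul0r.
- by move=> x y [q1 ->] [q2 ->]; exists (q1 + q2); rewrite mulrDl.
move=> s _.
have [q hq] := pair_div hm (esym (altmaj_rho hm hd s)).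
by exists q.
Qed.
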